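(* Let $A\in\mathbb{C}^{m\times n}$ have rank $r$, $B\in\mathbb{C}^{m\times n}$ have rank $s$, and $E=B-A$. Then $$\|B^{\dagger}-A^{\dagger}\|_{F}^{2}\geq\max\big\{\beta'_{1}+\|B^{\dagger}EA^{\dagger}\|_{F}^{2},\ \beta'_{2}+\|A^{\dagger}EB^{\dagger}\|_{F}^{2}\big\},$$ where $$\beta'_{1}:=\frac{\|E\|_{F}^{2}-\|EB^{\dagger}B\|_{F}^{2}}{\|A\|_{2}^{4}}+\frac{\|E\|_{F}^{2}-\|AA^{\dagger}E\|_{F}^{2}}{\|B\|_{2}^{4}},\qquad \beta'_{2}:=\frac{\|E\|_{F}^{2}-\|BB^{\dagger}E\|_{F}^{2}}{\|A\|_{2}^{4}}+\frac{\|E\|_{F}^{2}-\|EA^{\dagger}A\|_{F}^{2}}{\|B\|_{2}^{4}}.$$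
   Context: $M^{\dagger}$ denotes the Moore–Penrose inverse of $M$, $\|\cdot\|_{2}$ the spectral norm and $\|\cdot\|_{F}$ the Frobenius norm. *)

(* Defs.v *)
From HB Require Import structures.
From mathcomp Require Import all_boot all_order all_algebra.
From mathcomp Require Import classical_sets reals.
From mathcomp.real_closed Require Export complex.

Set Implicit Arguments.
Unset Strict Implicit.
Unset Printing Implicit Defensive.

Import Order.TTheory GRing.Theory Num.Theory.
Local Open Scope ring_scope.
Local Open Scope classical_set_scope.

Section Defs.
Variable R : realType.
Local Notation C := (complex R).

Definition ctrmx m n (A : 'M[C]_(m, n)) : 'M[C]_(n, m) :=
  \matrix_(i, j) conjc (A j i).

(* A^+ is the Moore-Penrose inverse of A (Penrose equations; it is unique) *)
Definition is_pinv m n (A : 'M[C]_(m, n)) (X : 'M[C]_(n, m)) : Prop :=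
  [/\ A *m X *m A = A, X *m A *m X = X,
      ctrmx (A *m X) = A *m X & ctrmx (X *m A) = X *m A].

Definition frob2 m n (A : 'M[C]_(m, n)) : R :=
  \sum_i \sum_j ((@complex.Re R (A i j)) ^+ 2 + (@complex.Im R (A i j)) ^+ 2).

Definition frob m n (A : 'M[C]_(m, n)) : R := Num.sqrt (frob2 A).

Definition spec_norm m n (A : 'M[C]_(m, n)) : R :=
  reals.sup [set frob (A *m x) | x in [set x : 'cV[C]_n | frob x = 1]].

End Defs.

(* Main.v *)
Require Import Defs.
From mathcomp Require Import all_boot all_order all_algebra.
From mathcomp Require Import classical_sets reals.
From mathcomp Require Import ring lra.
Import Order.TTheory GRing.Theory Num.Theory.
Local Open Scope ring_scope.
Set Implicit Arguments.
Unset Strict Implicit.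

Definition ip (R : realType) m n (X Y : 'M[complex R]_(m, n)) : complex R :=
  \tr (X *m ctrmx Y).

Lemma ctrmxE (R : realType) m n (A : 'M[complex R]_(m, n)) :
  ctrmx A = map_mx (@conjc R) A^T.
Proof. by apply/matrixP=> i j; rewrite !mxE. Qed.

Lemma ctrmxK (R : realType) m n (A : 'M[complex R]_(m, n)) : ctrmx (ctrmx A) = A.
Proof. by apply/matrixP=> i j; rewrite !mxE conjcK. Qed.

Lemma ctrmx_mul (R : realType) m n p (A : 'M[complex R]_(m, n)) (B : 'M_(n, p)) :
  ctrmx (A *m B) = ctrmx B *m ctrmx A.
Proof. by rewrite !ctrmxE trmx_mul map_mxM. Qed.

Lemma ctrmxD (R : realType) m n (A B : 'M[complex R]_(m, n)) :
  ctrmx (A + B) = ctrmx A + ctrmx B.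
Proof. by rewrite !ctrmxE linearD /= map_mxD. Qed.

Lemma ctrmxN (R : realType) m n (A : 'M[complex R]_(m, n)) :
  ctrmx (- A) = - ctrmx A.
Proof. by rewrite !ctrmxE linearN /= map_mxN. Qed.

Lemma ctrmxB (R : realType) m n (A B : 'M[complex R]_(m, n)) :
  ctrmx (A - B) = ctrmx A - ctrmx B.
Proof. by rewrite ctrmxD ctrmxN. Qed.

Lemma ctrmx1 (R : realType) m : ctrmx (1%:M : 'M[complex R]_m) = 1%:M.
Proof. by apply/matrixP=> i j; rewrite !mxE conjc_nat eq_sym. Qed.

Lemma ctrmxZ (R : realType) m n (c : complex R) (A : 'M[complex R]_(m, n)) :
  ctrmx (c *: A) = (conjc c) *: ctrmx A.
Proof. by apply/matrixP=> i j; rewrite !mxE rmorphM. Qed.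

Lemma ipDl (R : realType) m n (X Y Z : 'M[complex R]_(m, n)) :
  ip (X + Y) Z = ip X Z + ip Y Z.
Proof. by rewrite /ip mulmxDl mxtraceD. Qed.

Lemma ipDr (R : realType) m n (X Y Z : 'M[complex R]_(m, n)) :
  ip X (Y + Z) = ip X Y + ip X Z.
Proof. by rewrite /ip ctrmxD mulmxDr mxtraceD. Qed.

Lemma ipNl (R : realType) m n (X Y : 'M[complex R]_(m, n)) : ip (- X) Y = - ip X Y.
Proof. by rewrite /ip mulNmx raddfN. Qed.

Lemma ipNr (R : realType) m n (X Y : 'M[complex R]_(m, n)) : ip X (- Y) = - ip X Y.
Proof. by rewrite /ip ctrmxN mulmxN raddfN. Qed.

Lemma ipZl (R : realType) m n c (X Y : 'M[complex R]_(m, n)) : ip (c *: X) Y = c * ip X Y.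
Proof. by rewrite /ip -scalemxAl mxtraceZ. Qed.

Lemma ipZr (R : realType) m n c (X Y : 'M[complex R]_(m, n)) : ip X (c *: Y) = conjc c * ip X Y.
Proof. by rewrite /ip ctrmxZ -scalemxAr mxtraceZ. Qed.

Lemma ip_sym (R : realType) m n (X Y : 'M[complex R]_(m, n)) : ip Y X = conjc (ip X Y).
Proof.
rewrite /ip /mxtrace rmorph_sum; apply: eq_bigr => i _.
rewrite !mxE rmorph_sum; apply: eq_bigr => k _.
rewrite !mxE rmorphM; rewrite mulrC; congr (_ * _); by case: (Y i k) => a b; rewrite /= opprK.
Qed.

Lemma ip_adjl (R : realType) m n p (M : 'M[complex R]_(m, n)) (X : 'M_(n, p)) Y :
  ip (M *m X) Y = ip X (ctrmx M *m Y).
Proof. by rewrite /ip ctrmx_mul ctrmxK -mulmxA mxtrace_mulC mulmxA. Qed.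

Lemma ip_adjr (R : realType) m n p (M : 'M[complex R]_(n, p)) (X : 'M_(m, n)) Y :
  ip (X *m M) Y = ip X (Y *m ctrmx M).
Proof. by rewrite /ip ctrmx_mul ctrmxK mulmxA. Qed.

Lemma ip0r (R : realType) m n (X Y : 'M[complex R]_(m, n)) :
  ctrmx Y *m X = 0 -> ip X Y = 0.
Proof. by move=> h; rewrite /ip mxtrace_mulC h mxtrace0. Qed.

Lemma n2E (R : realType) (z : complex R) :
  ((complex.Re z) ^+ 2 + (complex.Im z) ^+ 2)%:C%C = z * conjc z.
Proof. case: z => a b; apply/eqP; rewrite eq_complex /=; apply/andP; split; apply/eqP; ring. Qed.

Lemma frob2E (R : realType) m n (X : 'M[complex R]_(m, n)) :
  (frob2 X)%:C%C = ip X X.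
Proof.
rewrite /frob2 /ip /mxtrace rmorph_sum; apply: eq_bigr => i _.
rewrite rmorph_sum !mxE; apply: eq_bigr => j _.
rewrite !mxE; exact: n2E.
Qed.

Lemma frob2_ge0 (R : realType) m n (X : 'M[complex R]_(m, n)) : 0 <= frob2 X.
Proof. by apply: sumr_ge0 => i _; apply: sumr_ge0 => j _; rewrite addr_ge0 ?sqr_ge0. Qed.

Lemma frob2_ip (R : realType) m n (X Y : 'M[complex R]_(m, n)) :
  frob2 X = frob2 Y <-> ip X X = ip Y Y.
Proof. by rewrite -!frob2E; split=> [->//|/complexI]. Qed.

Lemma real_quad (R : realFieldType) (a b c : R) : 0 <= a -> 0 <= c ->
  (forall t, 0 <= a - 2 * t * b + t ^+ 2 * c) -> b ^+ 2 <= a * c.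
Proof.
move=> a0 c0 H.
have [c_gt0|] := ltrP 0 c.
  have := H (b / c).
  have -> : a - 2 * (b / c) * b + (b / c) ^+ 2 * c = (a * c - b ^+ 2) / c.
    by field; rewrite gt_eqF.
  by rewrite pmulr_lge0 ?invr_gt0 // subr_ge0.
move=> cle0; have c_eq0 : c = 0 by apply/le_anti; rewrite cle0 c0.
subst c; rewrite mulr0.
have [->|bn0] := eqVneq b 0; first by rewrite expr0n.
have := H ((a + 1) / (2 * b)).
have -> : a - 2 * ((a + 1) / (2 * b)) * b + ((a + 1) / (2 * b)) ^+ 2 * 0 = -1.
  by field; rewrite bn0.
by rewrite oppr_ge0 ler10.
Qed.

Lemma addcJ' (R : realType) (z : complex R) : z + conjc z = (2 * complex.Re z)%:C%C.
Proof. case: z => a b; apply/eqP; rewrite eq_complex /=; apply/andP; split; apply/eqP; ring. Qed.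

Lemma cs_re (R : realType) m n (X Y : 'M[complex R]_(m, n)) :
  (complex.Re (ip X Y)) ^+ 2 <= frob2 X * frob2 Y.
Proof.
apply: real_quad; rewrite ?frob2_ge0 // => t.
have : 0 <= frob2 (X - (t%:C)%C *: Y) by apply: frob2_ge0.
suff -> : frob2 (X - (t%:C)%C *: Y) = frob2 X - 2 * t * complex.Re (ip X Y) + t ^+ 2 * frob2 Y by [].
apply: complexI; rewrite frob2E !ipDl !ipDr !ipNl !ipNr !ipZl !ipZr conjc_real.
rewrite (ip_sym X Y).
rewrite !rmorphD !rmorphN !rmorphM /= -!frob2E.
have h : conjc (ip X Y) = (2 * complex.Re (ip X Y))%:C%C - ip X Y.
  by rewrite -addcJ' addrC addKr.
rewrite h rmorphM /=; ring.
Qed.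

Definition n2 (R : realType) (z : complex R) : R :=
  (complex.Re z) ^+ 2 + (complex.Im z) ^+ 2.

Lemma n2_ge0 (R : realType) (z : complex R) : 0 <= n2 z.
Proof. by rewrite /n2 addr_ge0 ?sqr_ge0. Qed.

Lemma frob2Z (R : realType) m n (c : complex R) (U : 'M[complex R]_(m, n)) :
  frob2 (c *: U) = n2 c * frob2 U.
Proof.
apply: complexI; rewrite rmorphM /= frob2E ipZl ipZr n2E frob2E; ring.
Qed.

Lemma frob2_ctr (R : realType) m n (U : 'M[complex R]_(m, n)) :
  frob2 (ctrmx U) = frob2 U.
Proof. by apply: complexI; rewrite !frob2E /ip ctrmxK mxtrace_mulC. Qed.

Lemma frob2N (R : realType) m n (U : 'M[complex R]_(m, n)) :
  frob2 (- U) = frob2 U.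
Proof. by apply: (proj2 (frob2_ip _ _)); rewrite ipNl ipNr opprK. Qed.

Lemma cs_mod (R : realType) m n (U V : 'M[complex R]_(m, n)) :
  n2 (ip U V) <= frob2 U * frob2 V.
Proof.
set z := ip U V.
have := cs_re (conjc z *: U) V.
rewrite ipZl frob2Z.
have -> : complex.Re (conjc z * z) = n2 z.
  by rewrite mulrC -n2E.
have -> : n2 (conjc z) = n2 z by rewrite /n2; case: (z) => a b /=; rewrite sqrrN.
have [->|zn] := eqVneq (n2 z) 0; first by rewrite mulr_ge0 ?frob2_ge0.
have zp : 0 < n2 z by rewrite lt_def zn n2_ge0.
by rewrite expr2 -mulrA ler_pM2l.
Qed.

Lemma frob2_bound (R : realType) m n (A : 'M[complex R]_(m, n)) (x : 'cV[complex R]_n) :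
  frob2 (A *m x) <= (\sum_i frob2 (row i A)) * frob2 x.
Proof.
rewrite mulr_suml /frob2; apply: ler_sum => i _.
rewrite big_ord1.
have -> : (A *m x) i 0 = ip (row i A) (ctrmx x).
  rewrite /ip ctrmxK /mxtrace big_ord1 !mxE; apply: eq_bigr => k _; by rewrite mxE.
have := cs_mod (row i A) (ctrmx x).
by rewrite frob2_ctr.
Qed.

Lemma n2_real (R : realType) (r : R) : n2 (r%:C)%C = r ^+ 2.
Proof. by rewrite /n2 /= expr0n addr0. Qed.

Lemma frob_sqr (R : realType) m n (X : 'M[complex R]_(m, n)) : frob X ^+ 2 = frob2 X.
Proof. by rewrite /frob sqr_sqrtr // frob2_ge0. Qed.

Lemma frob_ge0 (R : realType) m n (X : 'M[complex R]_(m, n)) : 0 <= frob X.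
Proof. exact: sqrtr_ge0. Qed.

Lemma spec_vec (R : realType) m n (A : 'M[complex R]_(m, n)) (x : 'cV[complex R]_n) :
  frob2 (A *m x) <= spec_norm A ^+ 2 * frob2 x.
Proof.
set K := \sum_i frob2 (row i A).
have K0 : 0 <= K by apply: sumr_ge0 => i _; apply: frob2_ge0.
have hub : has_ubound [set frob (A *m x) | x in [set x : 'cV[complex R]_n | frob x = 1]].
  exists (Num.sqrt K) => y [x' /= hx' <-].
  have h1 : frob2 x' = 1 by rewrite -frob_sqr hx' expr1n.
  rewrite /frob; apply: ler_wsqrtr.
  by have := frob2_bound A x'; rewrite h1 mulr1.
have [x0|xn0] := eqVneq (frob2 x) 0.
  have := frob2_bound A x; rewrite x0 mulr0 => h.
  by apply: (le_trans h); rewrite mulr0.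
have xp : 0 < frob2 x by rewrite lt_def xn0 frob2_ge0.
set k := Num.sqrt (frob2 x).
have kp : 0 < k by rewrite sqrtr_gt0.
have k2 : k ^+ 2 = frob2 x by rewrite sqr_sqrtr // ltW.
set x' := ((k^-1)%:C)%C *: x.
have hx' : frob x' = 1.
  rewrite /frob frob2Z n2_real -k2 -exprMn mulVf ?gt_eqF // expr1n.
  exact: sqrtr1.
have hS : frob (A *m x') <= spec_norm A.
  by apply: (ub_le_sup hub); exists x'.
have hS2 : frob2 (A *m x') <= spec_norm A ^+ 2.
  by rewrite -frob_sqr !expr2; apply: ler_pM; rewrite ?frob_ge0.
move: hS2; rewrite /x' -scalemxAr frob2Z n2_real -k2.
by rewrite exprVn mulrC -ler_pdivlMr ?invr_gt0 ?exprn_gt0 // invrK.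
Qed.

Lemma frob2_cols (R : realType) m n (X : 'M[complex R]_(m, n)) :
  frob2 X = \sum_j frob2 (col j X).
Proof.
rewrite /frob2 exchange_big /=; apply: eq_bigr => j _.
apply: eq_bigr => i _; by rewrite big_ord1 !mxE.
Qed.

Lemma col_mul' (R : realType) m n p (A : 'M[complex R]_(m, n)) (X : 'M[complex R]_(n, p)) j :
  col j (A *m X) = A *m col j X.
Proof. by apply/matrixP => i k; rewrite !mxE; apply: eq_bigr => l _; rewrite !mxE. Qed.

Lemma specL (R : realType) m n p (A : 'M[complex R]_(m, n)) (X : 'M[complex R]_(n, p)) :
  frob2 (A *m X) <= spec_norm A ^+ 2 * frob2 X.
Proof.
rewrite !frob2_cols mulr_sumr; apply: ler_sum => j _.
by rewrite col_mul' spec_vec.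
Qed.

Lemma specLc (R : realType) m n p (A : 'M[complex R]_(m, n)) (Y : 'M[complex R]_(m, p)) :
  frob2 (ctrmx A *m Y) <= spec_norm A ^+ 2 * frob2 Y.
Proof.
set W := ctrmx A *m Y.
have hw : frob2 W = complex.Re (ip Y (A *m W)).
  by rewrite -[in RHS](ctrmxK A) -ip_adjl -frob2E.
have := cs_re Y (A *m W); rewrite -hw => h.
have h2 : frob2 W ^+ 2 <= frob2 Y * (spec_norm A ^+ 2 * frob2 W).
  by apply: (le_trans h); apply: ler_wpM2l; rewrite ?frob2_ge0 ?specL.
have [->|wn] := eqVneq (frob2 W) 0; first by rewrite mulr_ge0 ?sqr_ge0 ?frob2_ge0.
have wp : 0 < frob2 W by rewrite lt_def wn frob2_ge0.
move: h2; rewrite expr2 mulrA [_ * spec_norm A ^+ 2]mulrC ler_pM2r //.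
Qed.

Lemma zmod_id (V : zmodType) (x y a b : V) :
  x - y = - (a - b) + (x - b) + - (y - a).
Proof.
by rewrite !opprB [b - a + _]addrC -addrA [b - a + _]addrA subrK addrA subrK.
Qed.

Lemma ip0l (R : realType) m n (X Y : 'M[complex R]_(m, n)) :
  X *m ctrmx Y = 0 -> ip X Y = 0.
Proof. by move=> h; rewrite /ip h mxtrace0. Qed.

Lemma pyth2 (R : realType) m n (X Y : 'M[complex R]_(m, n)) :
  ip X Y = 0 -> frob2 (X + Y) = frob2 X + frob2 Y.
Proof.
move=> h; apply: complexI; rewrite rmorphD /= !frob2E !ipDl !ipDr h (ip_sym X Y) h.
by rewrite conjc0 !addr0 add0r.
Qed.

Lemma pyth3 (R : realType) m n (X Y Z : 'M[complex R]_(m, n)) :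
  ip X Y = 0 -> ip X Z = 0 -> ip Y Z = 0 ->
  frob2 (X + Y + Z) = frob2 X + frob2 Y + frob2 Z.
Proof.
move=> h1 h2 h3; rewrite pyth2 ?pyth2 // ipDl h2 h3 addr0 //.
Qed.

Lemma divle (R : realType) (x s f : R) :
  x <= s ^+ 2 * (s ^+ 2 * f) -> 0 <= f -> x / s ^+ 4 <= f.
Proof.
move=> h f0.
have [->|sn] := eqVneq s 0; first by rewrite expr0n invr0 mulr0.
have sp : 0 < s ^+ 4 by rewrite exprn_even_gt0.
by rewrite ler_pdivrMr // mulrC (_ : 4 = 2 + 2)%N // exprD -mulrA.
Qed.

Lemma half (R : realType) m n (A B : 'M[complex R]_(m, n)) (Ad Bd : 'M[complex R]_(n, m)) :
  is_pinv A Ad -> is_pinv B Bd ->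
  (frob2 (B - A) - frob2 ((B - A) *m Bd *m B)) / spec_norm A ^+ 4
  + (frob2 (B - A) - frob2 (A *m Ad *m (B - A))) / spec_norm B ^+ 4
  + frob2 (Bd *m (B - A) *m Ad) <= frob2 (Bd - Ad).
Proof.
case=> [hA1 hA2 hA3 hA4] [hB1 hB2 hB3 hB4].
set E := B - A.
set P := 1%:M - A *m Ad.
set Q := 1%:M - Bd *m B.
set T1 := - (Bd *m E *m Ad).
set T2 := Bd *m P.
set T3 := - (Q *m Ad).
have hP : ctrmx P = P by rewrite /P ctrmxB ctrmx1 hA3.
have hQ : ctrmx Q = Q by rewrite /Q ctrmxB ctrmx1 hB4.
have AdP : Ad *m P = 0 by rewrite /P mulmxBr mulmx1 mulmxA hA2 subrr.
have PA : P *m A = 0 by rewrite /P mulmxBl mul1mx hA1 subrr.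
have QBd : Q *m Bd = 0 by rewrite /Q mulmxBl mul1mx hB2 subrr.
have BQ : B *m Q = 0 by rewrite /Q mulmxBr mulmx1 mulmxA hB1 subrr.
have hD : Bd - Ad = T1 + T2 + T3.
  rewrite /T1 /T2 /T3 /E /P /Q !(mulmxBr, mulmxBl, mulmx1, mul1mx).
  by rewrite (zmod_id Bd Ad (Bd *m B *m Ad) (Bd *m A *m Ad)) !mulmxA.
have o12 : ip T1 T2 = 0.
  apply: ip0l; rewrite /T1 /T2 ctrmx_mul hP mulNmx -!mulmxA (mulmxA Ad) AdP.
  by rewrite mul0mx !mulmx0 oppr0.
have o13 : ip T1 T3 = 0.
  apply: ip0r; rewrite /T1 /T3 ctrmxN ctrmx_mul hQ mulNmx mulmxN opprK.
  by rewrite -!mulmxA (mulmxA Q) QBd mul0mx !mulmx0.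
have o23 : ip T2 T3 = 0.
  apply: ip0r; rewrite /T2 /T3 ctrmxN ctrmx_mul hQ mulNmx.
  by rewrite -!mulmxA (mulmxA Q) QBd mul0mx !mulmx0 oppr0.
rewrite hD pyth3 // /T1 frob2N.
have b2 : (frob2 E - frob2 (A *m Ad *m E)) / spec_norm B ^+ 4 <= frob2 T2.
  apply: divle; last exact: frob2_ge0.
  have hE : E = A *m Ad *m E + P *m E by rewrite /P mulmxBl mul1mx addrC subrK.
  have o : ip (A *m Ad *m E) (P *m E) = 0.
    apply: ip0r; rewrite ctrmx_mul hP -!mulmxA (mulmxA P) PA mul0mx !mulmx0 //.
  have -> : frob2 E - frob2 (A *m Ad *m E) = frob2 (P *m E).
    by rewrite {1}hE pyth2 // addrAC subrr add0r.
  have -> : P *m E = P *m B by rewrite /E mulmxBr PA subr0.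
  rewrite -frob2_ctr ctrmx_mul hP.
  have -> : ctrmx B = ctrmx B *m (B *m Bd).
    by rewrite -hB3 -ctrmx_mul hB1.
  rewrite -[ctrmx B *m _ *m P]mulmxA -[(B *m Bd) *m P]mulmxA.
  apply: (le_trans (specLc B (B *m T2))); apply: ler_wpM2l; first exact: sqr_ge0.
  exact: specL.
have b3 : (frob2 E - frob2 (E *m Bd *m B)) / spec_norm A ^+ 4 <= frob2 T3.
  apply: divle; last exact: frob2_ge0.
  have hE : E = E *m Bd *m B + E *m Q by rewrite /Q mulmxBr mulmx1 mulmxA addrC subrK.
  have o : ip (E *m Bd *m B) (E *m Q) = 0.
    apply: ip0l; rewrite ctrmx_mul hQ -!mulmxA (mulmxA B) BQ mul0mx !mulmx0 //.
  have -> : frob2 E - frob2 (E *m Bd *m B) = frob2 (E *m Q).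
    by rewrite {1}hE pyth2 // addrAC subrr add0r.
  have -> : E *m Q = - (A *m Q) by rewrite /E mulmxBl BQ sub0r.
  rewrite frob2N.
  have -> : A *m Q = A *m (ctrmx A *m (ctrmx Ad *m Q)).
    by rewrite (mulmxA (ctrmx A)) -ctrmx_mul hA4 !mulmxA hA1.
  have -> : ctrmx Ad *m Q = ctrmx (Q *m Ad) by rewrite ctrmx_mul hQ.
  rewrite /T3 frob2N -(frob2_ctr (Q *m Ad)).
  apply: (le_trans (specL _ _)); apply: ler_wpM2l; first exact: sqr_ge0.
  exact: specLc.
lra.
Qed.

Theorem corollary3p7 (R : realType) (m n r s : nat)
    (A B : 'M[complex R]_(m, n)) (Ad Bd : 'M[complex R]_(n, m)) :
  \rank A = r -> \rank B = s ->
  is_pinv A Ad -> is_pinv B Bd ->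
  let E := B - A in
  let beta1 := (frob E ^+ 2 - frob (E *m Bd *m B) ^+ 2) / spec_norm A ^+ 4
             + (frob E ^+ 2 - frob (A *m Ad *m E) ^+ 2) / spec_norm B ^+ 4 in
  let beta2 := (frob E ^+ 2 - frob (B *m Bd *m E) ^+ 2) / spec_norm A ^+ 4
             + (frob E ^+ 2 - frob (E *m Ad *m A) ^+ 2) / spec_norm B ^+ 4 in
  Num.max (beta1 + frob (Bd *m E *m Ad) ^+ 2) (beta2 + frob (Ad *m E *m Bd) ^+ 2)
    <= frob (Bd - Ad) ^+ 2.
Proof.
move=> _ _ hA hB; cbv zeta.
rewrite !frob_sqr.
have h1 := half hA hB.
have h2 := half hB hA.
move: h2; rewrite -(opprB B A) -(opprB Bd Ad) !(mulNmx, mulmxN, frob2N) => h2.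
rewrite ge_max h1 /=.
by rewrite (addrC ((frob2 (B - A) - frob2 (B *m Bd *m (B - A))) / spec_norm A ^+ 4)).
Qed.
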